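(* Let $P(Y)\in R[Y]$ be an $m$-triangular polynomial of degree $d$ and let $k_0,\ldots,k_a\ge0$ be integers. Then the polynomial $P(Y)\prod_{j=0}^a\big(U^{(j)}(Y)\big)^{k_j}$ is $\big(m+\sum_{j=0}^ak_j\big)$-triangular. In particular, if $n=\sum_{j=0}^ak_j$ and $\sum_{j=0}^ajk_j=n$, this polynomial is $(m+n)$-triangular of degree $d+(a-1)n$.
   Context: Fix a positive integer $a$ and variables $u_0,\ldots,u_a$. Let $R=\mathbb{C}[u_0,\ldots,u_{a-1}][u_a,u_a^{-1}]$ and $U(Y)=\sum_{j=0}^au_jY^j\in R[Y]$; $U^{(j)}$ is its $j$-th derivative with respect to $Y$. $\mathbb{Q}_+$ denotes the positive rational numbers. For an integer $m\ge1$, a polynomial $P(Y)=\sum_{l=0}^dp_lY^l\in R[Y]$ of degree $d\ge a$ is called $m$-triangular if for every $l$ with $d-a\le l\le d$ one has $p_l=q_lu_a^{m-1}u_{a-d+l}+P_l(u_{a-d+l+1},\ldots,u_a)$ for some $q_l\in\mathbb{Q}_+$ and some polynomial $P_l\in\mathbb{C}[u_{a-d+l+1},\ldots,u_a]$ (for $l=d$ this means $p_d=q_du_a^m$). *)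

(* Defs.v *)
From mathcomp Require Import all_boot all_algebra.
From mathcomp Require Import Rstruct.
From mathcomp Require Import complex.
From mathcomp Require Import mpoly.
Set Implicit Arguments. Unset Strict Implicit. Unset Printing Implicit Defensive.
Import GRing.Theory Num.Theory.
Local Open Scope ring_scope.

Local Notation "x %:F" := (@FracField.tofrac _ x).

Definition CC : Type := complex Rdefinitions.R.

(* Mp a = C[u_0,...,u_a]; variable u_j is 'X_j. *)
Notation Mp a := {mpoly CC[a.+1]}.
(* Fr a = its fraction field; R = C[u_0..u_{a-1}][u_a, u_a^{-1}] is the
   subring of Fr a of elements f / u_a^e (see inR). *)
Notation Fr a := {fraction {mpoly CC[a.+1]}}.

Definition uvar (a j : nat) : Mp a := 'X_(inord j).
Definition ufr (a j : nat) : Fr a := (uvar a j)%:F.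

Definition inR (a : nat) (x : Fr a) : Prop :=
  exists (e : nat) (f : Mp a), x = f%:F / ufr a a ^+ e.

Definition Rpoly (a : nat) (P : {poly Fr a}) : Prop := forall i, inR P`_i.

Definition Upoly (a : nat) : {poly Fr a} :=
  \sum_(j < a.+1) (ufr a j)%:P * 'X^j.

Definition in_vars_from (a k : nat) (p : Mp a) : Prop :=
  forall mon : 'X_{1..a.+1}, mon \in msupp p ->
    forall i : 'I_a.+1, (i < k)%N -> mon i = 0%N.

Definition triangular (a m d : nat) (P : {poly Fr a}) : Prop :=
  [/\ (0 < m)%N /\ Rpoly P, size P = d.+1, (a <= d)%N,
      (exists q : rat, 0 < q /\
         P`_d = ((ratr q : CC)%:MP * uvar a a ^+ m)%:F)
    & forall l : nat, (d - a <= l < d)%N ->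
      exists q : rat, 0 < q /\
      exists Pl : Mp a, in_vars_from (l - (d - a)).+1 Pl /\
        P`_l = ((ratr q : CC)%:MP * uvar a a ^+ (m - 1) * uvar a (l - (d - a))
                + Pl)%:F].

(* Main.v *)
Require Import Defs.
From mathcomp Require Import all_boot all_algebra.
From mathcomp Require Import Rstruct complex mpoly.
From mathcomp Require Import ring lra zify.
Set Implicit Arguments. Unset Strict Implicit. Unset Printing Implicit Defensive.
Import GRing.Theory Num.Theory.
Local Open Scope ring_scope.
Local Notation "x %:F" := (@FracField.tofrac _ x).



Lemma ivf0 a k : in_vars_from k (0 : Mp a).
Proof. by move=> mon; rewrite -mpolyC0 msupp0. Qed.

Lemma ivfC a k (c : CC) : in_vars_from k (c%:MP : Mp a).
Proof.
move=> mon; rewrite msuppC; case: eqP => // _.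
by rewrite mem_seq1 => /eqP -> i _; rewrite mnm0E.
Qed.

Lemma ivfD a k (p q : Mp a) : in_vars_from k p -> in_vars_from k q ->
  in_vars_from k (p + q).
Proof.
move=> hp hq mon /msuppD_le; rewrite mem_cat => /orP [/hp|/hq] //.
Qed.

Lemma ivfM a k (p q : Mp a) : in_vars_from k p -> in_vars_from k q ->
  in_vars_from k (p * q).
Proof.
move=> hp hq mon /msuppM_le /allpairsP [[m1 m2] /= [h1 h2 ->]] i hi.
by rewrite mnmDE (hp _ h1 _ hi) (hq _ h2 _ hi).
Qed.

Lemma ivf1 a k : in_vars_from k (1 : Mp a).
Proof. by rewrite -mpolyC1; apply: ivfC. Qed.

Lemma ivfX a k (p : Mp a) n : in_vars_from k p -> in_vars_from k (p ^+ n).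
Proof.
move=> hp; elim: n => [|n ih]; first by rewrite expr0; apply: ivf1.
by rewrite exprS; apply: ivfM.
Qed.

Lemma ivfMn a k (p : Mp a) n : in_vars_from k p -> in_vars_from k (p *+ n).
Proof.
move=> hp; elim: n => [|n ih]; first by rewrite mulr0n; apply: ivf0.
by rewrite mulrS; apply: ivfD.
Qed.

Lemma ivfU a k j : (k <= j <= a)%N -> in_vars_from k (uvar a j).
Proof.
move=> /andP [kj ja] mon; rewrite /uvar msuppX mem_seq1 => /eqP -> i hi.
rewrite mnm1E; apply/eqP; rewrite eqb0; apply/eqP => e.
by move: hi; rewrite -e inordK //; lia.
Qed.

Lemma ivf_mono a k k' (p : Mp a) : (k <= k')%N -> in_vars_from k' p ->
  in_vars_from k p.
Proof. move=> kk hp mon hm i hi; apply: hp => //; lia. Qed.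

Lemma uvar_neq0 a j : uvar a j != 0.
Proof. by rewrite -msupp_eq0 /uvar msuppX. Qed.

Lemma ufr_neq0 a j : ufr a j != 0.
Proof. by rewrite /ufr tofrac_eq0 uvar_neq0. Qed.

Lemma inRF a (f : Mp a) : inR (f%:F).
Proof. by exists 0%N, f; rewrite expr0 divr1. Qed.

Lemma inR_add a (x y : Fr a) : inR x -> inR y -> inR (x + y).
Proof.
move=> [e [f ->]] [e' [g ->]]; exists (e + e')%N.
exists (f * uvar a a ^+ e' + g * uvar a a ^+ e).
rewrite tofracD !tofracM !tofracXn -/(ufr a a) exprD.
by rewrite addf_div // expf_neq0 // ufr_neq0.
Qed.

Lemma inR_mul a (x y : Fr a) : inR x -> inR y -> inR (x * y).
Proof.
move=> [e [f ->]] [e' [g ->]]; exists (e + e')%N, (f * g).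
by rewrite !tofracM exprD mulf_div.
Qed.



Lemma coefU a t : (Upoly a)`_t = if (t <= a)%N then ufr a t else 0.
Proof.
rewrite /Upoly coef_sum.
under eq_bigr => j _ do rewrite coefCM coefXn.
case: leqP => ht.
  rewrite (bigD1 (Ordinal (ht : (t < a.+1)%N))) //= eqxx mulr1 big1 ?addr0 //.
  move=> j hj; case: eqP => [e|]; last by rewrite mulr0.
  by move: hj; rewrite -val_eqE /= e eqxx.
apply: big1 => j _; case: eqP => [e|]; last by rewrite mulr0.
by move: (ltn_ord j); rewrite -e; lia.
Qed.

Lemma coefV a j t : ((Upoly a)^`(j))`_t =
  if (j + t <= a)%N then ufr a (j + t) *+ (j + t) ^_ j else 0.
Proof. by rewrite coef_derivn coefU; case: ifP => //; rewrite mul0rn. Qed.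

Lemma inR0 a : inR (0 : Fr a).
Proof. by rewrite -tofrac0; apply: inRF. Qed.

Lemma RpolyM a (p q : {poly Fr a}) : Rpoly p -> Rpoly q -> Rpoly (p * q).
Proof.
move=> hp hq i; rewrite coefM.
apply: (big_ind (@inR a)); [exact: inR0 | exact: inR_add |].
by move=> k _; apply: inR_mul.
Qed.

Lemma RpolyV a j : Rpoly ((Upoly a)^`(j)).
Proof.
move=> t; rewrite coefV; case: ifP => _; last exact: inR0.
by rewrite /ufr -tofracMn; apply: inRF.
Qed.



Lemma ratrMn (c : rat) N : ratr (c * N%:R) = ratr c * N%:R :> CC.
Proof. by rewrite rmorphM rmorph_nat. Qed.

Lemma mpolyCMn a (x : CC) N : (x * N%:R)%:MP = x%:MP * N%:R :> Mp a.
Proof. by rewrite mpolyCM mpolyC_nat. Qed.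

Lemma alg1 a (c : rat) (x y : Mp a) N :
  ((ratr c)%:MP * x) * (y *+ N) = (ratr (c * N%:R))%:MP * x * y.
Proof. rewrite ratrMn mpolyCMn -mulr_natr. ring. Qed.

Lemma ratr0C : ratr 0 = 0 :> CC.
Proof. by rewrite rmorph0. Qed.

Lemma ratrDC (x y : rat) : ratr (x + y) = ratr x + ratr y :> CC.
Proof. by rewrite rmorphD. Qed.

Lemma mpolyCDa a (x y : CC) : (x + y)%:MP = x%:MP + y%:MP :> Mp a.
Proof. by rewrite rmorphD. Qed.

Lemma mpolyC0a a : (0 : CC)%:MP = 0 :> Mp a.
Proof. by rewrite rmorph0. Qed.

Lemma ivfU' a k j : (k <= j)%N -> (j <= a)%N -> in_vars_from k (uvar a j).
Proof. by move=> h1 h2; apply: ivfU; rewrite h1 h2. Qed.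

Lemma step a m d (P : {poly Fr a}) j : (j <= a)%N -> triangular m d P ->
  triangular m.+1 (d + (a - j)) (P * (Upoly a)^`(j)).
Proof.
move=> ja [[m0 RP] sP ad [q0 [q0p lead]] low].
set V := (Upoly a)^`(j); set n := (a - j)%N.
have cV t : V`_t = if (t <= n)%N then ufr a (j + t) *+ (j + t) ^_ j else 0.
  by rewrite /V coefV; have -> : (j + t <= a)%N = (t <= n)%N by apply/idP/idP; lia.
have PD k : (d < k)%N -> P`_k = 0.
  have : (size P <= d.+1)%N by rewrite sP.
  by move/leq_sizeP => h hk; apply: h.
have cQ i : (i <= a)%N ->
    (P * V)`_(d + n - i) = \sum_(t < n.+1) P`_(d + n - i - t) * V`_t.
  move=> ia; rewrite coefMr.
  rewrite (@big_ord_widen _ _ _ n.+1 (d + n - i).+1 (fun t => P`_(d + n - i - t) * V`_t));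
    last lia.
  rewrite [RHS]big_mkcond /=; apply: eq_bigr => t _; case: ifP => // ht.
  by rewrite cV ifN ?mulr0 // -ltnS ht.
have um : uvar a a ^+ (m - 1) * uvar a a = uvar a a ^+ m.
  by rewrite -exprSr subn1 prednK.
have Nj : (0 < a ^_ j)%N by rewrite ffact_gt0.
have lq : (P * V)`_(d + n) =
    ((ratr (q0 * (a ^_ j)%:R))%:MP * uvar a a ^+ m.+1)%:F.
  rewrite -[(d + n)%N]subn0 cQ // big_ord_recr /= big1 ?add0r; last first.
    by move=> t _; rewrite PD ?mul0r //; have := ltn_ord t; lia.
  have -> : (d + n - 0 - n = d)%N by lia.
  rewrite lead cV leqnn (_ : (j + n = a)%N); last lia.
  rewrite /ufr -tofracMn -tofracM alg1 exprSr mulrA //.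
have lq0 : (P * V)`_(d + n) != 0.
  rewrite lq tofrac_eq0 mulf_neq0 ?expf_neq0 ?uvar_neq0 //.
  rewrite mpolyC_eq0 fmorph_eq0 mulf_neq0 //; first exact: lt0r_neq0.
  by rewrite pnatr_eq0 -lt0n.
split.
- split => //; apply: RpolyM => //; exact: RpolyV.
- apply/eqP; rewrite eqn_leq; apply/andP; split.
    apply: (leq_trans (size_polyMleq _ _)); rewrite sP.
    have : (size V <= n.+1)%N.
      by apply/leq_sizeP => t ht; rewrite cV ifN //; lia.
    lia.
  rewrite ltnNge; apply/negP => /leq_sizeP /(_ (d + n)%N (leqnn _)) e.
  by move: lq0; rewrite e eqxx.
- lia.
- exists (q0 * (a ^_ j)%:R); split; last by rewrite lq.
  by rewrite mulr_gt0 // ltr0n.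
move=> l hl.
have [i [el [i0 ia]]] : exists i, l = (d + n - i)%N /\ (0 < i)%N /\ (i <= a)%N.
  by exists (d + n - l)%N; lia.
have -> : (l - (d + n - a) = a - i)%N by lia.
subst l; rewrite cQ // subSS subn0.
pose G (x : Fr a) := exists c : rat, 0 <= c /\ exists R,
  in_vars_from (a - i).+1 R /\
  x = ((ratr c)%:MP * uvar a a ^+ m * uvar a (a - i) + R)%:F.
have G0 : G 0.
  exists 0; split => //; exists 0; split; first exact: ivf0.
  by rewrite ratr0C mpolyC0a !mul0r addr0 tofrac0.
have GD x y : G x -> G y -> G (x + y).
  move=> [c1 [c1p [R1 [v1 ->]]]] [c2 [c2p [R2 [v2 ->]]]].
  exists (c1 + c2); split; first by rewrite addr_ge0.
  exists (R1 + R2); split; first exact: ivfD.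
  by rewrite -tofracD ratrDC mpolyCDa; congr (_%:F); ring.
rewrite big_ord_recr /=.
have Gs : G (\sum_(t < n) P`_(d + n - i - t) * V`_t).
  apply: (big_ind G) => // t _.
  have tn := ltn_ord t.
  case: (ltngtP (t + i) n) => h.
  + by rewrite PD ?mul0r //; lia.
  + have [q' [q'p [Pl [vPl eP]]]] := low (d - (t + i - n))%N ltac:(lia).
    rewrite (_ : (d + n - i - t = d - (t + i - n))%N); last lia.
    rewrite eP cV (ltnW tn).
    rewrite (_ : (d - (t + i - n) - (d - a) = a - (t + i - n))%N); last lia.
    exists 0; split => //.
    exists (((ratr q')%:MP * uvar a a ^+ (m - 1) * uvar a (a - (t + i - n)) + Pl)
       * (uvar a (j + t) *+ (j + t) ^_ j)); split; last first.
      by rewrite /ufr -tofracMn -tofracM ratr0C mpolyC0a !mul0r add0r.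
    apply: ivfM; last by apply: ivfMn; apply: ivfU'; lia.
    apply: ivfD; last by apply: (ivf_mono _ vPl); lia.
    apply: ivfM; last by apply: ivfU'; lia.
    apply: ivfM; first exact: ivfC.
    by apply: ivfX; apply: ivfU'; lia.
  + rewrite (_ : (d + n - i - t = d)%N); last lia.
    rewrite lead cV (ltnW tn) (_ : (j + t = a - i)%N); last lia.
    exists (q0 * ((a - i) ^_ j)%:R); split.
      by apply: mulr_ge0; [lra | exact: ler0n].
    exists 0; split; first exact: ivf0.
    by rewrite /ufr -tofracMn -tofracM alg1 addr0.
have [q' [q'p [Pl [vPl eP]]]] := low (d - i)%N ltac:(lia).
rewrite (_ : (d + n - i - n = d - i)%N); last lia.
rewrite eP cV leqnn (_ : (j + n = a)%N); last lia.
rewrite (_ : (d - i - (d - a) = a - i)%N); last lia.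
case: Gs => c1 [c1p [R1 [v1 ->]]].
exists (c1 + q' * (a ^_ j)%:R); split.
  have : 0 < q' * (a ^_ j)%:R by rewrite mulr_gt0 // ltr0n.
  lra.
exists (R1 + Pl * (uvar a a *+ (a ^_ j))); split.
  apply: ivfD => //; apply: ivfM; [apply: (ivf_mono _ vPl); lia | apply: ivfMn; apply: ivfU'; lia].
rewrite /ufr -tofracMn -tofracM -tofracD; congr (_%:F).
rewrite ratrDC mpolyCDa ratrMn mpolyCMn -um -mulr_natr; ring.
Qed.


Lemma stepk a m d (P : {poly Fr a}) j k : (j <= a)%N -> triangular m d P ->
  triangular (m + k) (d + k * (a - j)) (P * ((Upoly a)^`(j)) ^+ k).
Proof.
move=> hj hP; elim: k => [|k ih].
  by rewrite expr0 mulr1 addn0 mul0n addn0.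
rewrite exprSr mulrA addnS mulSnr addnA; exact: step.
Qed.

Lemma stepprod a m d (P : {poly Fr a}) (k : nat -> nat) N :
  (N <= a.+1)%N -> triangular m d P ->
  triangular (m + \sum_(j < N) k j) (d + \sum_(j < N) k j * (a - j))
    (P * \prod_(j < N) ((Upoly a)^`(j)) ^+ k j).
Proof.
move=> + hP; elim: N => [|N ih] hN.
  by rewrite !big_ord0 mulr1 !addn0.
rewrite !big_ord_recr /= mulrA !addnA; apply: stepk; first lia.
by apply: ih; lia.
Qed.

Theorem mainTheorem5 (a : nat) (Ha : (0 < a)%N) (m d : nat) (P : {poly Fr a})
    (k : nat -> nat) :
  triangular m d P ->
  let Q := P * \prod_(j < a.+1) ((Upoly a)^`(j)) ^+ k j in
  triangular (m + \sum_(j < a.+1) k j)%N (size Q).-1 Q /\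
  (forall n : nat, n = (\sum_(j < a.+1) k j)%N ->
     (\sum_(j < a.+1) j * k j)%N = n ->
     triangular (m + n)%N (d + (a - 1) * n)%N Q).
Proof.
move=> hP Q.
have H : triangular (m + \sum_(j < a.+1) k j) (d + \sum_(j < a.+1) k j * (a - j)) Q
  := stepprod k (leqnn a.+1) hP.
split.
  have sQ : size Q = (d + \sum_(j < a.+1) k j * (a - j)).+1 by case: H.
  by rewrite sQ.
move=> n -> hs.
have h2 : (\sum_(j < a.+1) k j * (a - j) + \sum_(j < a.+1) j * k j
           = a * \sum_(j < a.+1) k j)%N.
  rewrite -big_split big_distrr /=; apply: eq_bigr => j _.
  have := ltn_ord j; nia.
have e : (\sum_(j < a.+1) k j * (a - j) = (a - 1) * \sum_(j < a.+1) k j)%N.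
  rewrite mulnBl mul1n; lia.
by rewrite -e.
Qed.
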